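(* Assume the setting and Assumptions A1–A4 below. Run Ader with dynamical models (below) with \[ \mathcal{H}=\Big\{\eta_i=\frac{2^{i-1}D}{G}\sqrt{\frac1T}\ :\ i=1,\dots,N\Big\},\quad N=\Big\lceil\tfrac12\log_2(1+2T)\Big\rceil+1,\quad\alpha=\sqrt{8/(Tc^2)}. \] Then for any comparator sequence $\mathbf{u}_1,\dots,\mathbf{u}_{T+1}\in\mathcal{X}$, with $P_T'=\sum_{t=1}^T\|\mathbf{u}_{t+1}-\Phi_t(\mathbf{u}_t)\|_2$ and $k=\lfloor\frac12\log_2(1+\frac{2P_T'}{D})\rfloor+1$, \[ \sum_{t=1}^T f_t(\mathbf{x}_t)-\sum_{t=1}^T f_t(\mathbf{u}_t)\le\frac{3G}{2}\sqrt{T(D^2+2DP_T')}+\frac{c\sqrt{2T}}{4}\big[1+2\ln(k+1)\big]=O\big(\sqrt{T(1+P_T')}\big). \]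
   Context: Setting: $\mathcal{X}\subseteq\mathbb{R}^d$ nonempty closed convex; $f_t:\mathcal{X}\to\mathbb{R}$ convex differentiable, revealed after $\mathbf{x}_t$ is played. A1: $a\le f_t(\mathbf{x})\le a+c$ on $\mathcal{X}$. A2: $\max_{\mathbf{x}\in\mathcal{X}}\|\nabla f_t(\mathbf{x})\|_2\le G$. A3: $\mathbf{0}\in\mathcal{X}$, diameter of $\mathcal{X}$ at most $D$. A4: given maps $\Phi_t:\mathcal{X}\to\mathcal{X}$ with $\|\Phi_t(\mathbf{x})-\Phi_t(\mathbf{x}')\|_2\le\|\mathbf{x}-\mathbf{x}'\|_2$. Ader with dynamical models: for $\mathcal{H}=\{\eta_1\le\dots\le\eta_N\}$, one expert per $\eta$ starting at arbitrary $\mathbf{x}_1^\eta\in\mathcal{X}$ and updating $\bar{\mathbf{x}}_{t+1}^\eta=\Pi_{\mathcal{X}}[\mathbf{x}_t^\eta-\eta\nabla f_t(\mathbf{x}_t^\eta)]$, $\mathbf{x}_{t+1}^\eta=\Phi_t(\bar{\mathbf{x}}_{t+1}^\eta)$; initial weights $w_1^{\eta_i}=\frac{C}{i(i+1)}$, $C=1+1/N$; output $\mathbf{x}_t=\sum_\eta w_t^\eta\mathbf{x}_t^\eta$; weights $w_{t+1}^\eta=\frac{w_t^\eta e^{-\alpha f_t(\mathbf{x}_t^\eta)}}{\sum_\mu w_t^\mu e^{-\alpha f_t(\mathbf{x}_t^\mu)}}$. *)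

(* Defs.v *)
From Stdlib Require Import Reals Lra Lia ZArith.
Open Scope R_scope.

(* Vectors of R^d are represented as functions nat -> R whose coordinates
   with index >= d vanish (see in_Rd). *)
Definition vec := nat -> R.

Definition in_Rd (d : nat) (x : vec) : Prop := forall i, (d <= i)%nat -> x i = 0.

Definition vadd (x y : vec) : vec := fun i => x i + y i.
Definition vsub (x y : vec) : vec := fun i => x i - y i.
Definition vscale (a : R) (x : vec) : vec := fun i => a * x i.
Definition vzero : vec := fun _ => 0.

(* sum_{i=1}^n F i *)
Fixpoint rsum (n : nat) (F : nat -> R) : R :=
  match n with
  | O => 0
  | S m => rsum m F + F n
  end.

(* sum over coordinates 0..d-1 *)
Fixpoint csum (d : nat) (F : nat -> R) : R :=
  match d with
  | O => 0
  | S m => csum m F + F m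
  end.

Definition inner (d : nat) (x y : vec) : R := csum d (fun i => x i * y i).
Definition vnorm (d : nat) (x : vec) : R := sqrt (inner d x x).

Definition convex_set (d : nat) (X : vec -> Prop) : Prop :=
  forall x y lam, X x -> X y -> 0 <= lam <= 1 ->
    X (vadd (vscale lam x) (vscale (1 - lam) y)).

Definition closed_in_Rd (d : nat) (X : vec -> Prop) : Prop :=
  forall (s : nat -> vec) (y : vec), (forall n, X (s n)) -> in_Rd d y ->
    (forall eps, 0 < eps -> exists N0, forall n, (N0 <= n)%nat ->
        vnorm d (vsub (s n) y) < eps) ->
    X y.

Definition convex_on (X : vec -> Prop) (f : vec -> R) : Prop :=
  forall x y lam, X x -> X y -> 0 <= lam <= 1 ->
    f (vadd (vscale lam x) (vscale (1 - lam) y)) <= lam * f x + (1 - lam) * f y.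

Definition is_gradient (d : nat) (f : vec -> R) (x g : vec) : Prop :=
  in_Rd d g /\
  forall eps, 0 < eps -> exists delta, 0 < delta /\
    forall h, in_Rd d h -> vnorm d h < delta ->
      Rabs (f (vadd x h) - f x - inner d g h) <= eps * vnorm d h.

Definition is_projection (d : nat) (X : vec -> Prop) (proj : vec -> vec) : Prop :=
  forall y, X (proj y) /\ forall z, X z -> vnorm d (vsub y (proj y)) <= vnorm d (vsub y z).

Definition Rfloor_Z (x : R) : Z := Int_part x.
Definition Rceil_Z (x : R) : Z := (- Int_part (- x))%Z.
Definition log2R (x : R) : R := ln x / ln 2.

Section Ader.
Variables (f : nat -> vec -> R) (grad : nat -> vec -> vec)
          (Phi : nat -> vec -> vec) (proj : vec -> vec)
          (eta : nat -> R) (x1 : nat -> vec) (N : nat) (alpha : R).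

(* expert_aux n i = x_{n+1}^{eta_i} *)
Fixpoint expert_aux (n : nat) (i : nat) : vec :=
  match n with
  | O => x1 i
  | S m => let xt := expert_aux m i in
           Phi (S m) (proj (vsub xt (vscale (eta i) (grad (S m) xt))))
  end.

Definition expert (t i : nat) : vec := expert_aux (t - 1) i.

Definition C_const : R := 1 + 1 / INR N.

(* weight_aux n i = w_{n+1}^{eta_i} *)
Fixpoint weight_aux (n : nat) (i : nat) : R :=
  match n with
  | O => C_const / (INR i * (INR i + 1))
  | S m =>
      weight_aux m i * exp (- alpha * f (S m) (expert_aux m i)) /
      rsum N (fun mu => weight_aux m mu * exp (- alpha * f (S m) (expert_aux m mu)))
  end.

Definition weight (t i : nat) : R := weight_aux (t - 1) i.

Definition ader_output (t : nat) : vec :=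
  fun j => rsum N (fun i => weight t i * expert t i j).

End Ader.

Definition N_thm5 (T : nat) : nat :=
  (Z.to_nat (Rceil_Z (/ 2 * log2R (1 + 2 * INR T))) + 1)%nat.
Definition eta_thm5 (D G : R) (T : nat) (i : nat) : R :=
  2 ^ (i - 1) * D / G * sqrt (1 / INR T).
Definition alpha_thm5 (c : R) (T : nat) : R := sqrt (8 / (INR T * c ^ 2)).

(* Main.v *)
From Pilot Require Import Defs.
From Stdlib Require Import Reals Lra Lia ZArith FunctionalExtensionality.
From Coquelicot Require Import Coquelicot.
Open Scope R_scope.

Lemma nondecr_deriv (f df : R -> R) :
  (forall x, is_derive f x (df x)) -> (forall x, 0 <= x -> 0 <= df x) ->
  forall h, 0 <= h -> f 0 <= f h.
Proof.
intros Hd Hp h Hh.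
destruct (Req_dec h 0) as [->|Hh0]; [lra|].
destruct (MVT_gen f 0 h df) as [c [Hc Heq]].
- intros x _; apply Hd.
- intros x _. apply derivable_continuous_pt.
  exists (df x). apply is_derive_Reals. apply Hd.
- revert Hc. rewrite Rmin_left by lra. rewrite Rmax_right by lra. intros Hc.
  assert (0 <= df c) by (apply Hp; lra). nra.
Qed.

Lemma key_hoeff (p h : R) : 0 <= p <= 1 -> 0 <= h ->
  ln (1 - p + p * exp (- h)) <= - h * p + h ^ 2 / 8.
Proof.
intros Hp Hh.
assert (Hpos : forall x, 0 < 1 - p + p * exp (- x)).
{ intros x. pose proof (exp_pos (-x)). destruct (Rle_lt_dec 1 p); nra. }
set (H := fun x => x / 4 - p + p * exp (- x) / (1 - p + p * exp (- x))).
set (G := fun x => x ^ 2 / 8 - x * p - ln (1 - p + p * exp (- x))).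
assert (dH : forall x, is_derive H x (1/4 - p * (1 - p) * exp (- x) / (1 - p + p * exp (- x)) ^ 2)).
{ intros x. specialize (Hpos x). unfold H. auto_derive.
  - lra.
  - field. lra. }
assert (dG : forall x, is_derive G x (H x)).
{ intros x. specialize (Hpos x). unfold G, H. auto_derive.
  - lra.
  - field. lra. }
assert (H0 : forall x, 0 <= x -> 0 <= H x).
{ intros x Hx. replace 0 with (H 0) at 1.
  - apply (nondecr_deriv H _ dH); auto. intros y _.
    specialize (Hpos y). pose proof (exp_pos (-y)).
    set (e := exp (-y)) in *. set (A := 1 - p + p * e) in *.
    assert (p * (1 - p) * e <= A ^ 2 / 4) by (unfold A; pose proof (pow2_ge_0 ((1-p) - p*e)); nra).
    assert (0 < A ^ 2) by nra.
    assert (p * (1 - p) * e / A ^ 2 <= 1/4).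
    { apply Rmult_le_reg_r with (A^2); auto. unfold Rdiv. rewrite Rmult_assoc, Rinv_l by lra. lra. }
    lra.
  - unfold H. rewrite Ropp_0, exp_0. field; lra. }
assert (G0 : G 0 = 0).
{ unfold G; cbv beta. rewrite Ropp_0, exp_0. replace (1 - p + p * 1) with 1 by ring. rewrite ln_1. change (0 ^ 2 / 8 - 0 * p - 0 = 0)%R. field. }
pose proof (nondecr_deriv G H dG H0 h Hh) as H1. rewrite G0 in H1. unfold G in H1; cbv beta in H1.
lra.
Qed.

Import Pilot.Defs.
Open Scope R_scope.

Ltac vt := intros; unfold vadd, vsub, vscale, vzero; cbv beta; ring.

Lemma csum_ext d F G : (forall i, (i < d)%nat -> F i = G i) -> csum d F = csum d G.
Proof. induction d; simpl; intros H; auto. rewrite IHd, H; auto; lia. Qed.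

Lemma inner_ext d x x' y y' : (forall i, x i = x' i) -> (forall i, y i = y' i) ->
  inner d x y = inner d x' y'.
Proof. intros H1 H2; unfold inner; apply csum_ext; intros; rewrite H1, H2; auto. Qed.

Lemma inner_sym d x y : inner d x y = inner d y x.
Proof. unfold inner; induction d; simpl; auto. rewrite IHd; ring. Qed.

Lemma inner_nonneg d x : 0 <= inner d x x.
Proof. unfold inner; induction d; simpl. lra. pose proof (Rle_0_sqr (x d)); unfold Rsqr in *; lra. Qed.

Lemma nsq_comb d a b k :
  inner d (fun i => a i + k * b i) (fun i => a i + k * b i) =
  inner d a a + 2 * k * inner d a b + k ^ 2 * inner d b b.
Proof. unfold inner; induction d; simpl. ring. rewrite IHd; ring. Qed.

Lemma inner_comb d g a b k :
  inner d g (fun i => a i + k * b i) = inner d g a + k * inner d g b.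
Proof. unfold inner; induction d; simpl. ring. rewrite IHd; ring. Qed.

Lemma vnorm_sq d x : vnorm d x ^ 2 = inner d x x.
Proof. unfold vnorm. rewrite <- Rsqr_pow2. apply Rsqr_sqrt, inner_nonneg. Qed.

Lemma vnorm_nonneg d x : 0 <= vnorm d x.
Proof. apply sqrt_pos. Qed.

Lemma CS_sq d a b : inner d a b ^ 2 <= inner d a a * inner d b b.
Proof.
set (A := inner d a a); set (B := inner d b b); set (m := inner d a b).
assert (Hq : forall k, 0 <= A + 2 * k * m + k ^ 2 * B).
{ intros k. pose proof (inner_nonneg d (fun i => a i + k * b i)) as Hk. rewrite nsq_comb in Hk. exact Hk. }
assert (HA : 0 <= A) by apply inner_nonneg.
assert (HB : 0 <= B) by apply inner_nonneg.
destruct (Req_dec B 0) as [HB0|HB0].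
- destruct (Req_dec m 0) as [Hm|Hm].
  + rewrite Hm, HB0; lra.
  + specialize (Hq (- (A + 1) / (2 * m))). rewrite HB0 in Hq.
    replace (2 * (- (A + 1) / (2 * m)) * m) with (- (A + 1)) in Hq by (field; auto). lra.
- specialize (Hq (- m / B)).
  replace (A + 2 * (- m / B) * m + (- m / B) ^ 2 * B) with (A - m ^ 2 / B) in Hq by (field; auto).
  assert (m ^ 2 / B * B <= A * B) by (apply Rmult_le_compat_r; lra).
  replace (m ^ 2 / B * B) with (m ^ 2) in H by (field; auto). lra.
Qed.

Lemma CS d a b : inner d a b <= vnorm d a * vnorm d b.
Proof.
pose proof (CS_sq d a b). rewrite <- !vnorm_sq in H.
pose proof (vnorm_nonneg d a); pose proof (vnorm_nonneg d b).
destruct (Rle_lt_dec (inner d a b) 0). nra.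
apply Rsqr_incr_0_var. unfold Rsqr. nra. nra.
Qed.

Lemma vnorm_of_sq d x r : 0 <= r -> inner d x x <= r ^ 2 -> vnorm d x <= r.
Proof. intros H1 H2. pose proof (vnorm_nonneg d x). rewrite <- vnorm_sq in H2.
apply Rsqr_incr_0_var; unfold Rsqr; nra. Qed.

Lemma vtriangle d a b : vnorm d (vadd a b) <= vnorm d a + vnorm d b.
Proof.
apply vnorm_of_sq. pose proof (vnorm_nonneg d a); pose proof (vnorm_nonneg d b); lra.
rewrite (inner_ext d (vadd a b) (fun i => a i + 1 * b i) _ (fun i => a i + 1 * b i)) by vt.
rewrite nsq_comb. pose proof (CS d a b). rewrite <- !vnorm_sq. nra.
Qed.

Lemma vnorm_sub_sym d x y : vnorm d (vsub x y) = vnorm d (vsub y x).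
Proof. unfold vnorm, inner. f_equal. apply csum_ext; vt. Qed.

Lemma inner_scale_r d g k h : inner d g (vscale k h) = k * inner d g h.
Proof. unfold inner, vscale; induction d; simpl. ring. rewrite IHd; ring. Qed.

Lemma nsq_scale d k h : inner d (vscale k h) (vscale k h) = k ^ 2 * inner d h h.
Proof. unfold inner, vscale; induction d; simpl. ring. rewrite IHd; ring. Qed.

Lemma vnorm_scale d k h : 0 <= k -> vnorm d (vscale k h) = k * vnorm d h.
Proof. intros Hk. unfold vnorm. rewrite nsq_scale, sqrt_mult.
rewrite sqrt_pow2; auto. nra. apply inner_nonneg. Qed.

Lemma in_Rd_sub d x y : in_Rd d x -> in_Rd d y -> in_Rd d (vsub x y).
Proof. unfold in_Rd, vsub; intros H1 H2 i Hi; rewrite H1, H2; auto; ring. Qed.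

Lemma in_Rd_scale d k x : in_Rd d x -> in_Rd d (vscale k x).
Proof. unfold in_Rd, vscale; intros H1 i Hi; rewrite H1; auto; ring. Qed.

Lemma abs_le_l a b : Rabs a <= b -> -b <= a.
Proof. intros H; pose proof (Rle_abs (-a)) as H0; rewrite Rabs_Ropp in H0; lra. Qed.

Lemma grad_ineq d (X : vec -> Prop) f g x u :
  (forall x, X x -> in_Rd d x) -> convex_on X f -> is_gradient d f x g -> X x -> X u ->
  f x - f u <= inner d g (vsub x u).
Proof.
intros HXd Hcv [Hgd Hg] Hx Hu.
set (h := vsub u x).
assert (Hgh : inner d g (vsub x u) = - inner d g h).
{ unfold h, inner, vsub. clear. induction d; simpl. ring. rewrite IHd. ring. }
rewrite Hgh.
apply Rnot_lt_le; intros Hlt.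
set (gap := inner d g h - (f u - f x)).
assert (Hgap : 0 < gap) by (unfold gap; lra).
set (nh := vnorm d h).
assert (Hnh : 0 <= nh) by apply vnorm_nonneg.
destruct (Hg (gap / (2 * (nh + 1)))) as [delta [Hdel Hd]].
{ apply Rdiv_lt_0_compat; lra. }
set (lam := delta / (nh + delta)).
assert (Hlam0 : 0 < lam) by (apply Rdiv_lt_0_compat; lra).
assert (Hlam1 : lam <= 1).
{ unfold lam. apply Rmult_le_reg_r with (nh + delta). lra. unfold Rdiv. rewrite Rmult_assoc, Rinv_l by lra. lra. }
assert (Hlnh : lam * nh < delta).
{ unfold lam. apply Rmult_lt_reg_r with (nh + delta). lra.
  replace (delta / (nh + delta) * nh * (nh + delta)) with (delta * nh) by (field; lra). nra. }
specialize (Hd (vscale lam h)).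
rewrite vnorm_scale in Hd by lra. fold nh in Hd.
assert (Hin : in_Rd d (vscale lam h)).
{ apply in_Rd_scale, in_Rd_sub; auto. }
specialize (Hd Hin Hlnh).
rewrite inner_scale_r in Hd.
assert (Heq : vadd x (vscale lam h) = vadd (vscale lam u) (vscale (1 - lam) x)).
{ apply functional_extensionality; intros i; unfold h; vt. }
rewrite Heq in Hd.
pose proof (Hcv u x lam Hu Hx (conj (Rlt_le _ _ Hlam0) Hlam1)) as Hc.
apply abs_le_l in Hd.
assert (Hk : lam * (f u - f x) >= lam * (inner d g h - gap / (2 * (nh + 1)) * nh)) by nra.
assert (Hk2 : f u - f x >= inner d g h - gap / (2 * (nh + 1)) * nh).
{ apply Rle_ge, Rmult_le_reg_l with lam; lra. }
assert (gap / (2 * (nh + 1)) * nh <= gap / 2).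
{ apply Rmult_le_reg_r with (2 * (nh + 1)). lra.
  replace (gap / (2 * (nh + 1)) * nh * (2 * (nh + 1))) with (gap * nh) by (field; lra).
  nra. }
unfold gap in *. lra.
Qed.

Lemma proj_nonexp d (X : vec -> Prop) proj y z :
  convex_set d X -> is_projection d X proj -> X z ->
  inner d (vsub (proj y) z) (vsub (proj y) z) <= inner d (vsub y z) (vsub y z).
Proof.
intros Hcv Hp Hz.
destruct (Hp y) as [HXp Hmin].
set (p := proj y) in *.
set (a := vsub y p). set (b := vsub z p).
set (A := inner d a a). set (B := inner d b b). set (m := inner d a b).
assert (HB : 0 <= B) by apply inner_nonneg.
assert (Hl : forall lam, 0 < lam <= 1 -> 2 * m <= lam * B).
{ intros lam Hlam.
  set (q := vadd (vscale lam z) (vscale (1 - lam) p)).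
  assert (HXq : X q) by (apply Hcv; auto; lra).
  pose proof (Hmin q HXq) as Hq.
  apply sqrt_le_0 in Hq; try apply inner_nonneg.
  rewrite (inner_ext d (vsub y q) (fun i => a i + (- lam) * b i) _ (fun i => a i + (- lam) * b i)) in Hq
    by (intros; unfold q, a, b; vt).
  rewrite nsq_comb in Hq. fold a A m B in Hq.
  assert (lam * (2 * m) <= lam * (lam * B)) by nra.
  apply Rmult_le_reg_l with lam; lra. }
assert (Hm : m <= 0).
{ apply Rnot_lt_le; intros Hm.
  assert (H1 : 0 < m / (B + m) <= 1).
  { split. apply Rdiv_lt_0_compat; lra.
    apply Rmult_le_reg_r with (B + m). lra. unfold Rdiv. rewrite Rmult_assoc, Rinv_l by lra. lra. }
  specialize (Hl _ H1).
  assert (m / (B + m) * B < m).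
  { apply Rmult_lt_reg_r with (B + m). lra.
    replace (m / (B + m) * B * (B + m)) with (m * B) by (field; lra). nra. }
  lra. }
rewrite (inner_ext d (vsub y z) (fun i => a i + (-1) * b i) _ (fun i => a i + (-1) * b i))
  by (intros; unfold a, b; vt).
rewrite nsq_comb. fold A m B.
assert (inner d (vsub p z) (vsub p z) = B).
{ unfold B, b, inner. apply csum_ext. intros; vt. }
rewrite H. assert (0 <= A) by apply inner_nonneg. lra.
Qed.

Lemma rsum_ext n F G : (forall i, (1 <= i <= n)%nat -> F i = G i) -> rsum n F = rsum n G.
Proof. induction n; simpl; intros H; auto. rewrite IHn, H; auto; try lia; intros; apply H; lia. Qed.

Lemma rsum_plus n F G : rsum n (fun i => F i + G i) = rsum n F + rsum n G.
Proof. induction n; simpl. ring. rewrite IHn; ring. Qed.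

Lemma rsum_scal n k F : rsum n (fun i => k * F i) = k * rsum n F.
Proof. induction n; simpl. ring. rewrite IHn; ring. Qed.

Lemma rsum_le n F G : (forall i, (1 <= i <= n)%nat -> F i <= G i) -> rsum n F <= rsum n G.
Proof. induction n; simpl; intros H. lra. pose proof (H (S n)). assert (rsum n F <= rsum n G) by (apply IHn; intros; apply H; lia).
 assert (F (S n) <= G (S n)) by (apply H; lia). lra. Qed.

Lemma rsum_nonneg n F : (forall i, (1 <= i <= n)%nat -> 0 <= F i) -> 0 <= rsum n F.
Proof. intros H. replace 0 with (rsum n (fun _ => 0)). apply rsum_le; auto.
 induction n; simpl; auto. rewrite IHn. ring. intros; apply H; lia. Qed.

Lemma rsum_pos n F : (1 <= n)%nat -> (forall i, (1 <= i <= n)%nat -> 0 < F i) -> 0 < rsum n F.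
Proof. intros Hn H. destruct n. lia. simpl. assert (0 <= rsum n F) by (apply rsum_nonneg; intros; apply Rlt_le, H; lia).
 assert (0 < F (S n)) by (apply H; lia). lra. Qed.

Lemma rsum_ge_term n F k : (forall i, (1 <= i <= n)%nat -> 0 <= F i) -> (1 <= k <= n)%nat -> F k <= rsum n F.
Proof. induction n; intros H Hk. lia. simpl. destruct (Nat.eq_dec k (S n)) as [->|].
 assert (0 <= rsum n F) by (apply rsum_nonneg; intros; apply H; lia). lra.
 assert (F k <= rsum n F) by (apply IHn; [intros; apply H|]; lia). assert (0 <= F (S n)) by (apply H; lia). lra. Qed.

Lemma rsum_const n k : rsum n (fun _ => k) = INR n * k.
Proof. induction n; simpl rsum. simpl; ring. rewrite IHn. rewrite S_INR. ring. Qed.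

Lemma rsum_harm n : rsum n (fun i => 1 / (INR i * (INR i + 1))) = 1 - 1 / (INR n + 1).
Proof. induction n. simpl; field. cbn [rsum]. rewrite IHn, S_INR.
 pose proof (pos_INR n). field. lra. Qed.

Lemma exp_conv u t lam : 0 <= lam <= 1 -> exp (u + lam * t) <= (1 - lam) * exp u + lam * exp (u + t).
Proof.
intros Hlam. set (m := lam * t).
replace u with ((u + m) + - m) at 2 by ring.
replace (u + t) with ((u + m) + (t - m)) by ring.
rewrite (exp_plus (u+m) (-m)), (exp_plus (u+m) (t-m)).
pose proof (exp_ineq1_le (t - m)). pose proof (exp_ineq1_le (- m)).
pose proof (exp_pos (u + m)).
assert (exp (u+m) * ((1 - lam) * (1 + - m) + lam * (1 + (t - m))) <=
        (1 - lam) * (exp (u + m) * exp (- m)) + lam * (exp (u + m) * exp (t - m))).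
{ assert (0 <= lam * exp (u+m)) by nra. assert (0 <= (1 - lam) * exp (u+m)) by nra.
  pose proof (Rmult_le_compat_l _ _ _ H2 H). pose proof (Rmult_le_compat_l _ _ _ H3 H0). nra. }
replace ((1 - lam) * (1 + - m) + lam * (1 + (t - m))) with 1 in H2 by (unfold m; ring). lra.
Qed.

Lemma exp_chord al a c l : 0 < c -> a <= l <= a + c ->
  exp (- al * l) <= (a + c - l) / c * exp (- al * a) + (l - a) / c * exp (- al * (a + c)).
Proof.
intros Hc Hl.
assert (Hlam : 0 <= (l - a) / c <= 1).
{ split. unfold Rdiv; apply Rmult_le_pos; [lra|apply Rlt_le, Rinv_0_lt_compat; lra].
  apply Rmult_le_reg_r with c; auto. unfold Rdiv; rewrite Rmult_assoc, Rinv_l; lra. }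
pose proof (exp_conv (- al * a) (- al * c) _ Hlam) as H.
replace (- al * a + (l - a) / c * (- al * c)) with (- al * l) in H by (field; lra).
replace (- al * a + - al * c) with (- al * (a + c)) in H by ring.
replace ((a + c - l) / c) with (1 - (l - a) / c) by (field; lra). exact H.
Qed.

Lemma ln_le' x y : 0 < x -> x <= y -> ln x <= ln y.
Proof. intros H1 [H2|H2]. left; apply ln_increasing; auto. subst; lra. Qed.

Lemma hoeffding n (v l : nat -> R) al a c :
  0 <= al -> 0 < c ->
  (forall i, (1 <= i <= n)%nat -> 0 <= v i) -> rsum n v = 1 ->
  (forall i, (1 <= i <= n)%nat -> a <= l i <= a + c) ->
  ln (rsum n (fun i => v i * exp (- al * l i))) <=
    - al * rsum n (fun i => v i * l i) + al ^ 2 * c ^ 2 / 8.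
Proof.
intros Hal Hc Hv Hs Hl.
set (S := rsum n (fun i => v i * l i)).
set (p := (S - a) / c).
assert (HS : a <= S <= a + c).
{ assert (rsum n (fun i => v i * a) <= S /\ S <= rsum n (fun i => v i * (a + c))).
  { split; apply rsum_le; intros i Hi; specialize (Hl i Hi); specialize (Hv i Hi); nra. }
  rewrite (rsum_ext n (fun i => v i * a) (fun i => a * v i)), rsum_scal in H by (intros; ring).
  rewrite (rsum_ext n (fun i => v i * (a + c)) (fun i => (a + c) * v i)), rsum_scal in H by (intros; ring).
  rewrite Hs in H. lra. }
assert (Hp : 0 <= p <= 1).
{ unfold p; split. unfold Rdiv; apply Rmult_le_pos; [lra|apply Rlt_le, Rinv_0_lt_compat; lra].
  apply Rmult_le_reg_r with c; auto. unfold Rdiv; rewrite Rmult_assoc, Rinv_l; lra. }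
assert (Hb : rsum n (fun i => v i * exp (- al * l i)) <= exp (- al * a) * (1 - p + p * exp (- (al * c)))).
{ eapply Rle_trans.
  - apply rsum_le with (G := fun i => v i * ((a + c - l i) / c * exp (- al * a) + (l i - a) / c * exp (- al * (a + c)))).
    intros i Hi. apply Rmult_le_compat_l. apply Hv; auto. apply exp_chord; auto.
  - right.
    rewrite (rsum_ext n _ (fun i => ((a + c) / c * exp (- al * a) - a / c * exp (- al * (a + c))) * v i
              + (exp (- al * (a + c)) / c - exp (- al * a) / c) * (v i * l i))) by (intros; field; lra).
    rewrite rsum_plus, !rsum_scal. fold S. rewrite Hs.
    replace (- al * (a + c)) with (- al * a + - (al * c)) by ring. rewrite exp_plus.
    unfold p. field. lra. }
assert (Hpos : 0 < 1 - p + p * exp (- (al * c))).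
{ pose proof (exp_pos (- (al * c))). destruct (Rle_lt_dec 1 p); nra. }
assert (Hpos2 : 0 < rsum n (fun i => v i * exp (- al * l i))).
{ apply Rlt_le_trans with (rsum n (fun i => exp (- al * (a + c)) * v i)).
  rewrite rsum_scal, Hs. rewrite Rmult_1_r. apply exp_pos.
  apply rsum_le. intros i Hi. specialize (Hl i Hi); specialize (Hv i Hi).
  rewrite Rmult_comm. apply Rmult_le_compat_l; auto. assert (- al * (a + c) <= - al * l i) by nra. destruct H; [left; apply exp_increasing; auto| right; f_equal; auto]. }
eapply Rle_trans. apply ln_le'; [exact Hpos2| exact Hb].
rewrite ln_mult, ln_exp by (try apply exp_pos; auto).
pose proof (key_hoeff p (al * c) Hp ltac:(nra)).
fold S. unfold p in H. 
assert (- (al * c) * ((S - a) / c) = - al * (S - a)) by (field; lra).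
unfold p. lra.
Qed.

Lemma jensen d (X : vec -> Prop) (f : vec -> R) n (v : nat -> R) (x : nat -> vec) :
  convex_set d X -> convex_on X f -> (1 <= n)%nat ->
  (forall i, (1 <= i <= n)%nat -> 0 < v i) -> (forall i, (1 <= i <= n)%nat -> X (x i)) ->
  let P := fun j => rsum n (fun i => v i * x i j) / rsum n v in
  X P /\ f P <= rsum n (fun i => v i * f (x i)) / rsum n v.
Proof.
intros HXc Hf Hn Hv Hx. induction n as [|n IH]. lia.
destruct (Nat.eq_dec n 0) as [->|Hn0].
- simpl. assert (E : (fun j => (0 + v 1%nat * x 1%nat j) / (0 + v 1%nat)) = x 1%nat).
  { apply functional_extensionality; intros j. assert (0 < v 1%nat) by (apply Hv; lia). field. lra. }
  rewrite E. split. apply Hx; lia. right. assert (0 < v 1%nat) by (apply Hv; lia). field. lra.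
- destruct IH as [IH1 IH2]; try lia.
  { intros; apply Hv; lia. } { intros; apply Hx; lia. }
  set (Pn := fun j => rsum n (fun i => v i * x i j) / rsum n v) in *.
  assert (Hs : 0 < rsum n v) by (apply rsum_pos; [lia| intros; apply Hv; lia]).
  assert (Hw : 0 < v (S n)) by (apply Hv; lia).
  set (lam := rsum n v / (rsum n v + v (S n))).
  assert (Hlam : 0 <= lam <= 1).
  { unfold lam; split. unfold Rdiv; apply Rmult_le_pos; [lra|apply Rlt_le, Rinv_0_lt_compat; lra].
    apply Rmult_le_reg_r with (rsum n v + v (S n)). lra. unfold Rdiv; rewrite Rmult_assoc, Rinv_l; lra. }
  simpl rsum.
  assert (E : (fun j => (rsum n (fun i => v i * x i j) + v (S n) * x (S n) j) / (rsum n v + v (S n)))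
            = vadd (vscale lam Pn) (vscale (1 - lam) (x (S n)))).
  { apply functional_extensionality; intros j. unfold vadd, vscale, Pn, lam. field. lra. }
  rewrite E. split.
  + apply HXc; auto; apply Hx; lia.
  + eapply Rle_trans. apply (Hf Pn (x (S n)) lam IH1); auto; apply Hx; lia.
    assert (lam * f Pn <= lam * (rsum n (fun i => v i * f (x i)) / rsum n v)) by (apply Rmult_le_compat_l; lra).
    eapply Rle_trans. apply Rplus_le_compat_r. exact H.
    right. unfold lam. field. lra.
Qed.

Lemma expert_in_X (X : vec -> Prop) T grad Phi proj eta x1 N d :
  is_projection d X proj ->
  (forall t x, (1 <= t <= T)%nat -> X x -> X (Phi t x)) ->
  (forall i, (1 <= i <= N)%nat -> X (x1 i)) ->
  forall m i, (m <= T)%nat -> (1 <= i <= N)%nat -> X (expert_aux grad Phi proj eta x1 m i).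
Proof.
intros Hp HPhi Hx1 m. induction m; intros i Hm Hi; simpl.
- auto.
- apply HPhi. lia. apply Hp.
Qed.

Lemma vnorm_ext d x y : (forall i, x i = y i) -> vnorm d x = vnorm d y.
Proof. intros H; unfold vnorm; f_equal; apply inner_ext; auto. Qed.

Lemma sq_le_of_norm d x G : 0 <= G -> vnorm d x <= G -> inner d x x <= G ^ 2.
Proof. intros HG H. rewrite <- vnorm_sq. pose proof (vnorm_nonneg d x). nra. Qed.

Lemma expert_step d (X : vec -> Prop) T (f : nat -> vec -> R) grad Phi proj eta x1 u i G D m :
  (forall x, X x -> in_Rd d x) -> convex_set d X -> is_projection d X proj ->
  (forall t, (1 <= t <= T)%nat -> convex_on X (f t)) ->
  (forall t x, (1 <= t <= T)%nat -> X x -> is_gradient d (f t) x (grad t x)) ->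
  (forall t x, (1 <= t <= T)%nat -> X x -> vnorm d (grad t x) <= G) ->
  (forall x y, X x -> X y -> vnorm d (vsub x y) <= D) ->
  (forall t x, (1 <= t <= T)%nat -> X x -> X (Phi t x)) ->
  (forall t x y, (1 <= t <= T)%nat -> X x -> X y ->
      vnorm d (vsub (Phi t x) (Phi t y)) <= vnorm d (vsub x y)) ->
  (forall t, (1 <= t <= S T)%nat -> X (u t)) ->
  0 <= G -> 0 <= D -> 0 < eta i ->
  (m < T)%nat ->
  X (expert_aux grad Phi proj eta x1 m i) ->
  let e := expert_aux grad Phi proj eta x1 in
  2 * eta i * (f (S m) (e m i) - f (S m) (u (S m))) <=
    inner d (vsub (e m i) (u (S m))) (vsub (e m i) (u (S m)))
    - inner d (vsub (e (S m) i) (u (S (S m)))) (vsub (e (S m) i) (u (S (S m))))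
    + eta i ^ 2 * G ^ 2 + 2 * D * vnorm d (vsub (u (S (S m))) (Phi (S m) (u (S m)))).
Proof.
intros HXd HXc Hp Hcv Hgr HA2 HA3 HPin HPlip Hu HG HD Heta Hm Hxm e.
set (t := S m).
set (xt := e m i). set (g := grad t xt). set (et := eta i).
set (ybar := proj (vsub xt (vscale et g))).
assert (He : e (S m) i = Phi t ybar) by reflexivity.
change (e t i) with (Phi t ybar).
assert (Ht : (1 <= t <= T)%nat) by (unfold t; lia).
assert (Hut : X (u t)) by (apply Hu; unfold t; lia).
assert (Hut1 : X (u (S t))) by (apply Hu; unfold t; lia).
assert (Hyb : X ybar) by apply Hp.
pose proof (proj_nonexp d X proj (vsub xt (vscale et g)) (u t) HXc Hp Hut) as HA.
fold ybar in HA.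
rewrite (inner_ext d (vsub (vsub xt (vscale et g)) (u t)) (fun j => vsub xt (u t) j + (- et) * g j) _
   (fun j => vsub xt (u t) j + (- et) * g j)) in HA by vt.
rewrite nsq_comb in HA.
rewrite (inner_sym d (vsub xt (u t)) g) in HA.
pose proof (grad_ineq d X (f t) g xt (u t) HXd (Hcv t Ht) (Hgr t xt Ht Hxm) Hxm Hut) as Hgi.
pose proof (sq_le_of_norm d g G HG (HA2 t xt Ht Hxm)) as Hgg.
set (An := vnorm d (vsub (Phi t ybar) (u (S t)))).
set (Bn := vnorm d (vsub ybar (u t))).
set (del := vnorm d (vsub (u (S t)) (Phi t (u t)))).
assert (HAB : An <= Bn + del).
{ unfold An. rewrite (vnorm_ext d _ (vadd (vsub (Phi t ybar) (Phi t (u t))) (vsub (Phi t (u t)) (u (S t)))))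
    by vt.
  eapply Rle_trans. apply vtriangle. rewrite (vnorm_sub_sym d (Phi t (u t))).
  pose proof (HPlip t ybar (u t) Ht Hyb Hut). fold del. unfold Bn. lra. }
assert (HAD : An <= D) by (apply HA3; auto).
assert (HBD : Bn <= D) by (apply HA3; auto).
assert (HA0 : 0 <= An) by apply vnorm_nonneg.
assert (HB0 : 0 <= Bn) by apply vnorm_nonneg.
assert (Hd0 : 0 <= del) by apply vnorm_nonneg.
assert (Hsq : An ^ 2 <= Bn ^ 2 + 2 * D * del).
{ destruct (Rle_lt_dec An Bn).
  - assert (An*An <= Bn*Bn) by (apply Rmult_le_compat; lra). assert (0 <= D*del) by (apply Rmult_le_pos; lra). replace (An^2) with (An*An) by ring. replace (Bn^2) with (Bn*Bn) by ring. lra.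
  - assert ((An - Bn) * (An + Bn) <= del * (2 * D)) by (apply Rmult_le_compat; lra). replace (An^2) with ((An - Bn) * (An + Bn) + Bn*Bn) by ring. replace (Bn^2) with (Bn*Bn) by ring. lra. }
unfold An, Bn in Hsq. rewrite !vnorm_sq in Hsq.
fold del. unfold t in *.
assert (0 <= et ^ 2) by nra.
assert (et ^ 2 * inner d g g <= et ^ 2 * G ^ 2) by (apply Rmult_le_compat_l; auto).
assert (2 * et * (f (S m) xt - f (S m) (u (S m))) <= 2 * et * inner d g (vsub xt (u (S m)))).
{ apply Rmult_le_compat_l. unfold et; lra. exact Hgi. }
lra.
Qed.

Lemma expert_S grad Phi proj (eta : nat -> R) x1 m i :
  expert grad Phi proj eta x1 (S m) i = expert_aux grad Phi proj eta x1 m i.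
Proof. unfold expert. simpl. rewrite Nat.sub_0_r. reflexivity. Qed.

Lemma rsum_minus n F G : rsum n (fun i => F i - G i) = rsum n F - rsum n G.
Proof. induction n; simpl. ring. rewrite IHn; ring. Qed.

Lemma expert_regret d (X : vec -> Prop) T (f : nat -> vec -> R) grad Phi proj eta x1 u i G D N :
  (forall x, X x -> in_Rd d x) -> convex_set d X -> is_projection d X proj ->
  (forall t, (1 <= t <= T)%nat -> convex_on X (f t)) ->
  (forall t x, (1 <= t <= T)%nat -> X x -> is_gradient d (f t) x (grad t x)) ->
  (forall t x, (1 <= t <= T)%nat -> X x -> vnorm d (grad t x) <= G) ->
  (forall x y, X x -> X y -> vnorm d (vsub x y) <= D) ->
  (forall t x, (1 <= t <= T)%nat -> X x -> X (Phi t x)) ->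
  (forall t x y, (1 <= t <= T)%nat -> X x -> X y ->
      vnorm d (vsub (Phi t x) (Phi t y)) <= vnorm d (vsub x y)) ->
  (forall t, (1 <= t <= S T)%nat -> X (u t)) ->
  (forall i, (1 <= i <= N)%nat -> X (x1 i)) ->
  0 <= G -> 0 <= D -> 0 < eta i -> (1 <= i <= N)%nat ->
  rsum T (fun t => f t (expert grad Phi proj eta x1 t i)) - rsum T (fun t => f t (u t)) <=
   (D ^ 2 + 2 * D * rsum T (fun t => vnorm d (vsub (u (S t)) (Phi t (u t))))) / (2 * eta i)
   + eta i * INR T * G ^ 2 / 2.
Proof.
intros HXd HXc Hp Hcv Hgr HA2 HA3 HPin HPlip Hu Hx1 HG HD Heta Hi.
set (e := expert_aux grad Phi proj eta x1).
set (del := fun t => vnorm d (vsub (u (S t)) (Phi t (u t)))).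
assert (Hsum : forall m, (m <= T)%nat ->
  2 * eta i * rsum m (fun t => f t (expert grad Phi proj eta x1 t i) - f t (u t)) <=
  inner d (vsub (e 0%nat i) (u 1%nat)) (vsub (e 0%nat i) (u 1%nat))
  - inner d (vsub (e m i) (u (S m))) (vsub (e m i) (u (S m)))
  + INR m * eta i ^ 2 * G ^ 2 + 2 * D * rsum m del).
{ induction m; intros Hm.
  - simpl. lra.
  - cbn [rsum]. rewrite expert_S. rewrite S_INR.
    pose proof (IHm ltac:(lia)).
    pose proof (expert_step d X T f grad Phi proj eta x1 u i G D m HXd HXc Hp Hcv Hgr HA2 HA3 HPin HPlip Hu HG HD Heta ltac:(lia)
      (expert_in_X X T grad Phi proj eta x1 N d Hp HPin Hx1 m i ltac:(lia) Hi)).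
    cbv zeta in H0. fold e in H0. fold e. unfold del in *. cbv beta. lra. }
specialize (Hsum T (le_n T)).
rewrite rsum_minus in Hsum. fold del.
assert (H0 : inner d (vsub (e 0%nat i) (u 1%nat)) (vsub (e 0%nat i) (u 1%nat)) <= D ^ 2).
{ apply sq_le_of_norm; auto. apply HA3. apply Hx1; auto. apply Hu; lia. }
pose proof (inner_nonneg d (vsub (e T i) (u (S T)))).
set (R := rsum T (fun t => f t (expert grad Phi proj eta x1 t i)) - rsum T (fun t => f t (u t))) in *.
apply Rmult_le_reg_l with (2 * eta i). lra.
replace (2 * eta i * ((D ^ 2 + 2 * D * rsum T del) / (2 * eta i) + eta i * INR T * G ^ 2 / 2))
  with (D ^ 2 + 2 * D * rsum T del + INR T * eta i ^ 2 * G ^ 2) by (field; lra).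
lra.
Qed.

Lemma weight_S f grad Phi proj (eta : nat -> R) x1 N alpha m i :
  weight f grad Phi proj eta x1 N alpha (S m) i = weight_aux f grad Phi proj eta x1 N alpha m i.
Proof. unfold weight. simpl. rewrite Nat.sub_0_r. reflexivity. Qed.

Lemma w_pos f grad Phi proj eta x1 N alpha : (1 <= N)%nat ->
  forall m i, (1 <= i <= N)%nat -> 0 < weight_aux f grad Phi proj eta x1 N alpha m i.
Proof.
intros HN m. induction m; intros i Hi; simpl.
- unfold C_const. assert (1 <= INR i) by (apply (le_INR 1); lia).
  assert (1 <= INR N) by (apply (le_INR 1); lia).
  apply Rdiv_lt_0_compat. assert (0 < 1 / INR N) by (apply Rdiv_lt_0_compat; lra). lra. nra.
- apply Rdiv_lt_0_compat. apply Rmult_lt_0_compat; auto. apply exp_pos.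
  apply rsum_pos; auto. intros. apply Rmult_lt_0_compat; auto. apply exp_pos.
Qed.

Lemma w_sum f grad Phi proj eta x1 N alpha : (1 <= N)%nat ->
  forall m, rsum N (weight_aux f grad Phi proj eta x1 N alpha m) = 1.
Proof.
intros HN m. destruct m; simpl.
- rewrite (rsum_ext N _ (fun i => C_const N * (1 / (INR i * (INR i + 1))))).
  rewrite rsum_scal, rsum_harm. unfold C_const. assert (1 <= INR N) by (apply (le_INR 1); lia).
  field. lra.
  intros i Hi. assert (1 <= INR i) by (apply (le_INR 1); lia). field. lra.
- set (Z := rsum N (fun mu => weight_aux f grad Phi proj eta x1 N alpha m mu * exp (- alpha * f (S m) (expert_aux grad Phi proj eta x1 m mu)))).
  assert (0 < Z).
  { apply rsum_pos; auto. intros. apply Rmult_lt_0_compat; [apply w_pos; auto| apply exp_pos]. }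
  rewrite (rsum_ext N _ (fun i => / Z * (weight_aux f grad Phi proj eta x1 N alpha m i *
      exp (- alpha * f (S m) (expert_aux grad Phi proj eta x1 m i))))).
  rewrite rsum_scal. fold Z. field. lra.
  intros. unfold Rdiv. ring.
Qed.

Lemma meta_regret f grad Phi proj eta x1 N alpha T a c k :
  (1 <= N)%nat -> (1 <= k <= N)%nat -> 0 <= alpha -> 0 < c ->
  (forall m i, (m < T)%nat -> (1 <= i <= N)%nat ->
     a <= f (S m) (expert_aux grad Phi proj eta x1 m i) <= a + c) ->
  (forall m, (m < T)%nat -> f (S m) (ader_output f grad Phi proj eta x1 N alpha (S m)) <=
     rsum N (fun i => weight_aux f grad Phi proj eta x1 N alpha m i * f (S m) (expert_aux grad Phi proj eta x1 m i))) ->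
  alpha * rsum T (fun t => f t (ader_output f grad Phi proj eta x1 N alpha t)) <=
  alpha * rsum T (fun t => f t (expert grad Phi proj eta x1 t k))
  - ln (weight_aux f grad Phi proj eta x1 N alpha 0 k) + INR T * (alpha ^ 2 * c ^ 2 / 8).
Proof.
intros HN Hk Hal Hc Hl Hj.
set (w := weight_aux f grad Phi proj eta x1 N alpha).
set (e := expert_aux grad Phi proj eta x1).
assert (Hind : forall m, (m <= T)%nat ->
  alpha * rsum m (fun t => f t (ader_output f grad Phi proj eta x1 N alpha t)) <=
  alpha * rsum m (fun t => f t (expert grad Phi proj eta x1 t k))
  + ln (w m k) - ln (w 0%nat k) + INR m * (alpha ^ 2 * c ^ 2 / 8)).
{ induction m; intros Hm.
  - simpl. lra.
  - cbn [rsum]. rewrite expert_S, S_INR.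
    specialize (IHm ltac:(lia)).
    set (Z := rsum N (fun mu => w m mu * exp (- alpha * f (S m) (e m mu)))).
    assert (HZ : 0 < Z).
    { apply rsum_pos; auto. intros. apply Rmult_lt_0_compat; [apply w_pos; auto| apply exp_pos]. }
    assert (Hw : w (S m) k = w m k * exp (- alpha * f (S m) (e m k)) / Z) by reflexivity.
    assert (Hwp : 0 < w m k) by (apply w_pos; auto).
    assert (Hln : ln (w (S m) k) = ln (w m k) + - alpha * f (S m) (e m k) - ln Z).
    { rewrite Hw. unfold Rdiv. pose proof (exp_pos (- alpha * f (S m) (e m k))).
      rewrite ln_mult by (try apply Rmult_lt_0_compat; try apply Rinv_0_lt_compat; auto).
      rewrite ln_mult by auto. rewrite ln_exp, ln_Rinv by auto. ring. }
    pose proof (hoeffding N (w m) (fun i => f (S m) (e m i)) alpha a c Hal Hc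
       ltac:(intros; apply Rlt_le, w_pos; auto) (w_sum f grad Phi proj eta x1 N alpha HN m)
       ltac:(intros; apply Hl; auto; lia)) as Hh.
    fold Z in Hh.
    pose proof (Hj m ltac:(lia)) as Hjm. fold w e in Hjm.
    assert (alpha * f (S m) (ader_output f grad Phi proj eta x1 N alpha (S m)) <=
            alpha * rsum N (fun i => w m i * f (S m) (e m i))) by (apply Rmult_le_compat_l; auto).
    fold e. rewrite Hln. cbv beta in Hh. fold Z in Hh. lra. }
specialize (Hind T (le_n T)).
assert (ln (w T k) <= 0).
{ rewrite <- ln_1. apply ln_le'. apply w_pos; auto.
  rewrite <- (w_sum f grad Phi proj eta x1 N alpha HN T). apply rsum_ge_term; auto.
  intros; apply Rlt_le, w_pos; auto. }
fold w. lra.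
Qed.

Lemma sqrt_exp q : 0 < q -> sqrt q = exp (ln q / 2).
Proof.
intros Hq. rewrite <- (exp_ln q) at 1 by auto.
replace (ln q) with (ln q / 2 + ln q / 2) at 1 by field.
rewrite exp_plus. rewrite <- (Rmult_1_r (exp (ln q / 2))) at 2.
replace (exp (ln q / 2) * exp (ln q / 2)) with (exp (ln q / 2) ^ 2) by ring.
apply sqrt_pow2. apply Rlt_le, exp_pos.
Qed.

Lemma pow2_exp j : 2 ^ j = exp (INR j * ln 2).
Proof. rewrite <- Rpower_pow by lra. reflexivity. Qed.

Lemma k_facts T P D : (1 <= T)%nat -> 0 < D -> 0 <= P -> P <= INR T * D ->
  exists j : nat, Rfloor_Z (/ 2 * log2R (1 + 2 * P / D)) = Z.of_nat j /\
    (S j <= N_thm5 T)%nat /\ 2 ^ j <= sqrt (1 + 2 * P / D) <= 2 * 2 ^ j.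
Proof.
intros HT HD HP HPT.
set (q := 1 + 2 * P / D).
assert (Hq1 : 1 <= q) by (unfold q; assert (0 <= 2 * P / D) by (unfold Rdiv; apply Rmult_le_pos; [lra| apply Rlt_le, Rinv_0_lt_compat; lra]); lra).
assert (HqT : q <= 1 + 2 * INR T).
{ unfold q. assert (P / D <= INR T).
  { apply Rmult_le_reg_r with D; auto. unfold Rdiv; rewrite Rmult_assoc, Rinv_l; lra. }
  unfold Rdiv in *. lra. }
assert (Hl2 : 0 < ln 2) by (rewrite <- ln_1; apply ln_increasing; lra).
set (y := / 2 * log2R q).
assert (Hy0 : 0 <= y).
{ unfold y, log2R. assert (0 <= ln q) by (rewrite <- ln_1; apply ln_le'; lra).
  unfold Rdiv. apply Rmult_le_pos. lra. apply Rmult_le_pos; auto. apply Rlt_le, Rinv_0_lt_compat; auto. }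
destruct (base_Int_part y) as [Hz1 Hz2].
set (z := Int_part y) in *.
assert (Hz0 : (0 <= z)%Z).
{ assert (-1 < z)%Z by (apply lt_IZR; lra). lia. }
exists (Z.to_nat z). split; [|split].
- unfold Rfloor_Z. fold z. rewrite Z2Nat.id; auto.
- unfold N_thm5.
  set (zz := / 2 * log2R (1 + 2 * INR T)).
  assert (Hyz : y <= zz).
  { unfold y, zz, log2R. apply Rmult_le_compat_l. lra. unfold Rdiv. apply Rmult_le_compat_r.
    apply Rlt_le, Rinv_0_lt_compat; auto. apply ln_le'; lra. }
  destruct (base_Int_part (- zz)) as [Hc1 _].
  assert (Hc : (z <= Rceil_Z zz)%Z).
  { unfold Rceil_Z. apply le_IZR. rewrite opp_IZR. lra. }
  lia.
- assert (HINR : INR (Z.to_nat z) = IZR z) by (rewrite INR_IZR_INZ, Z2Nat.id; auto).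
  rewrite sqrt_exp by lra.
  assert (Hy : ln q / 2 = y * ln 2) by (unfold y, log2R; field; lra).
  rewrite Hy, !pow2_exp, HINR.
  split.
  + assert (IZR z * ln 2 <= y * ln 2) by (apply Rmult_le_compat_r; lra).
    destruct H; [left; apply exp_increasing; auto | right; rewrite H; auto].
  + assert (E2 : 2 * exp (IZR z * ln 2) = exp (ln 2 + IZR z * ln 2)) by (rewrite exp_plus, exp_ln; lra).
    rewrite E2. left. apply exp_increasing. nra.
Qed.

Theorem theorem5
  (d : nat) (X : vec -> Prop) (T : nat)
  (f : nat -> vec -> R) (grad : nat -> vec -> vec)
  (Phi : nat -> vec -> vec) (proj : vec -> vec)
  (a c G D : R) (x1 : nat -> vec) (u : nat -> vec)
  (* X is a nonempty closed convex subset of R^d *)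
  (HXd : forall x, X x -> in_Rd d x)
  (HXconv : convex_set d X)
  (HXclosed : closed_in_Rd d X)
  (Hproj : is_projection d X proj)
  (HT : (1 <= T)%nat)
  (Hc : 0 < c) (HG : 0 < G) (HD : 0 < D)
  (* f_t convex and differentiable, with gradient grad t *)
  (Hconv : forall t, (1 <= t <= T)%nat -> convex_on X (f t))
  (Hgrad : forall t x, (1 <= t <= T)%nat -> X x -> is_gradient d (f t) x (grad t x))
  (* A1 *)
  (HA1 : forall t x, (1 <= t <= T)%nat -> X x -> a <= f t x <= a + c)
  (* A2 *)
  (HA2 : forall t x, (1 <= t <= T)%nat -> X x -> vnorm d (grad t x) <= G)
  (* A3 *)
  (HA3_0 : X vzero)
  (HA3_D : forall x y, X x -> X y -> vnorm d (vsub x y) <= D)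
  (* A4 *)
  (HA4_in : forall t x, (1 <= t <= T)%nat -> X x -> X (Phi t x))
  (HA4_lip : forall t x y, (1 <= t <= T)%nat -> X x -> X y ->
      vnorm d (vsub (Phi t x) (Phi t y)) <= vnorm d (vsub x y))
  (* arbitrary initial points of the experts *)
  (Hx1 : forall i, (1 <= i <= N_thm5 T)%nat -> X (x1 i))
  (* comparator sequence *)
  (Hu : forall t, (1 <= t <= S T)%nat -> X (u t)) :
  let N := N_thm5 T in
  let eta := eta_thm5 D G T in
  let alpha := alpha_thm5 c T in
  let xt := ader_output f grad Phi proj eta x1 N alpha in
  let P := rsum T (fun t => vnorm d (vsub (u (S t)) (Phi t (u t)))) in
  let k := (Rfloor_Z (/ 2 * log2R (1 + 2 * P / D)) + 1)%Z in
  rsum T (fun t => f t (xt t)) - rsum T (fun t => f t (u t))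
  <= 3 * G / 2 * sqrt (INR T * (D ^ 2 + 2 * D * P))
     + c * sqrt (2 * INR T) / 4 * (1 + 2 * ln (IZR k + 1)).

Proof.
intros N eta alpha xt P k.
assert (HN : (1 <= N)%nat) by (unfold N, N_thm5; lia).
assert (HTp : 1 <= INR T) by (apply (le_INR 1); auto).
assert (HP0 : 0 <= P) by (apply rsum_nonneg; intros; apply vnorm_nonneg).
assert (HPT : P <= INR T * D).
{ rewrite <- rsum_const. apply rsum_le. intros t Ht. apply HA3_D; [apply Hu; lia| apply HA4_in; [lia| apply Hu; lia]]. }
destruct (k_facts T P D HT HD HP0 HPT) as [j [Hkj [HjN Hr]]].
fold N in HjN.
set (kn := S j) in *.
assert (Hk : IZR k = INR kn).
{ unfold k. fold P. rewrite Hkj, plus_IZR, <- INR_IZR_INZ. unfold kn. rewrite S_INR. reflexivity. }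
set (sT := sqrt (INR T)).
assert (HsT : 0 < sT) by (apply sqrt_lt_R0; lra).
assert (HsT2 : sT ^ 2 = INR T) by (apply pow2_sqrt; lra).
set (r := 2 ^ j) in *.
assert (Hr0 : 0 < r) by (apply pow_lt; lra).
set (q := 1 + 2 * P / D) in *.
assert (Hq : 0 <= q) by (unfold q; assert (0 <= 2 * P / D) by (unfold Rdiv; apply Rmult_le_pos; [lra| apply Rlt_le, Rinv_0_lt_compat; lra]); lra).
set (s := sqrt q) in *.
assert (Hs2 : s ^ 2 = q) by (apply pow2_sqrt; auto).
assert (Heta : eta kn = r * D / (G * sT)).
{ unfold eta, eta_thm5, kn. simpl (S j - 1)%nat. rewrite Nat.sub_0_r. fold r.
  unfold Rdiv at 2. rewrite Rmult_1_l, sqrt_inv. fold sT. field. lra. }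
assert (Hetap : 0 < eta kn).
{ rewrite Heta. apply Rdiv_lt_0_compat. nra. nra. }
pose proof (expert_regret d X T f grad Phi proj eta x1 u kn G D N HXd HXconv Hproj Hconv Hgrad HA2 HA3_D HA4_in HA4_lip Hu Hx1
   ltac:(lra) ltac:(lra) Hetap ltac:(unfold kn; lia)) as Hexp.
fold P in Hexp.
assert (Hexp2 : (D ^ 2 + 2 * D * P) / (2 * eta kn) + eta kn * INR T * G ^ 2 / 2 <= 3 * G / 2 * (sT * (D * s))).
{ assert (E : D ^ 2 + 2 * D * P = D ^ 2 * s ^ 2) by (rewrite Hs2; unfold q; field; lra).
  rewrite E, Heta, <- HsT2.
  replace (D ^ 2 * s ^ 2 / (2 * (r * D / (G * sT))) + r * D / (G * sT) * sT ^ 2 * G ^ 2 / 2)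
    with (D * G * sT / 2 * ((s ^ 2 + r ^ 2) / r)) by (field; repeat split; lra).
  assert ((s ^ 2 + r ^ 2) / r <= 3 * s).
  { apply Rmult_le_reg_r with r; auto. unfold Rdiv. rewrite Rmult_assoc, Rinv_l by lra.
    assert (0 <= (s - r) * (2 * r - s)) by (apply Rmult_le_pos; lra). nra. }
  assert (0 <= D * G * sT / 2) by (unfold Rdiv; repeat apply Rmult_le_pos; lra).
  apply Rmult_le_compat_l with (r := D * G * sT / 2) in H; auto. lra. }
assert (Hsq : sqrt (INR T * (D ^ 2 + 2 * D * P)) = sT * (D * s)).
{ rewrite sqrt_mult by (try lra; nra). fold sT. f_equal.
  replace (D ^ 2 + 2 * D * P) with (D ^ 2 * q) by (unfold q; field; lra).
  rewrite sqrt_mult by (try lra; nra). rewrite sqrt_pow2 by lra. reflexivity. }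
assert (Hin : forall m i, (m <= T)%nat -> (1 <= i <= N)%nat -> X (expert_aux grad Phi proj eta x1 m i)).
{ intros m i Hm Hi. apply (expert_in_X X T grad Phi proj eta x1 N d Hproj HA4_in Hx1 m i Hm Hi). }
assert (Hl : forall m i, (m < T)%nat -> (1 <= i <= N)%nat ->
     a <= f (S m) (expert_aux grad Phi proj eta x1 m i) <= a + c).
{ intros m i Hm Hi. apply HA1. lia. apply Hin; auto; lia. }
assert (Hj : forall m, (m < T)%nat -> f (S m) (ader_output f grad Phi proj eta x1 N alpha (S m)) <=
     rsum N (fun i => weight_aux f grad Phi proj eta x1 N alpha m i * f (S m) (expert_aux grad Phi proj eta x1 m i))).
{ intros m Hm.
  destruct (jensen d X (f (S m)) N (weight_aux f grad Phi proj eta x1 N alpha m) (expert_aux grad Phi proj eta x1 m)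
     HXconv (Hconv (S m) ltac:(lia)) HN (w_pos f grad Phi proj eta x1 N alpha HN m)
     ltac:(intros; apply Hin; auto; lia)) as [_ HJ].
  rewrite (w_sum f grad Phi proj eta x1 N alpha HN m) in HJ.
  replace (ader_output f grad Phi proj eta x1 N alpha (S m)) with
    (fun j0 => rsum N (fun i => weight_aux f grad Phi proj eta x1 N alpha m i * expert_aux grad Phi proj eta x1 m i j0) / 1).
  rewrite Rdiv_1_r in HJ. exact HJ.
  apply functional_extensionality; intros j0. unfold ader_output. rewrite Rdiv_1_r.
  apply rsum_ext; intros i Hi. rewrite weight_S, expert_S. reflexivity. }
pose proof (meta_regret f grad Phi proj eta x1 N alpha T a c kn HN ltac:(unfold kn; lia)) as Hmeta.
assert (Hal : 0 < alpha).
{ unfold alpha, alpha_thm5. apply sqrt_lt_R0. apply Rdiv_lt_0_compat. lra. nra. }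
specialize (Hmeta (Rlt_le _ _ Hal) Hc Hl Hj).
set (K := c * sqrt (2 * INR T) / 4).
assert (HK0 : 0 < K) by (unfold K; assert (0 < sqrt (2 * INR T)) by (apply sqrt_lt_R0; lra); nra).
assert (HK2 : K ^ 2 = INR T * c ^ 2 / 8).
{ unfold K. replace ((c * sqrt (2 * INR T) / 4) ^ 2) with (c ^ 2 * sqrt (2 * INR T) ^ 2 / 16) by field.
  rewrite pow2_sqrt by lra. field. }
assert (Hal2 : alpha ^ 2 = 8 / (INR T * c ^ 2)).
{ unfold alpha, alpha_thm5. apply pow2_sqrt. apply Rlt_le, Rdiv_lt_0_compat. lra. nra. }
assert (HaK : alpha * K = 1).
{ assert ((alpha * K) ^ 2 = 1).
  { replace ((alpha * K) ^ 2) with (alpha ^ 2 * K ^ 2) by ring. rewrite Hal2, HK2. field. split; lra. }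
  assert (0 < alpha * K) by nra. nra. }
set (w0 := weight_aux f grad Phi proj eta x1 N alpha 0 kn) in Hmeta.
assert (Hw0 : w0 = C_const N / (INR kn * (INR kn + 1))) by reflexivity.
assert (Hkn : 1 <= INR kn) by (apply (le_INR 1); unfold kn; lia).
assert (HC : 1 <= C_const N).
{ unfold C_const. assert (1 <= INR N) by (apply (le_INR 1); lia). assert (0 < 1 / INR N) by (apply Rdiv_lt_0_compat; lra). lra. }
assert (Hlnw : - ln w0 <= 2 * ln (INR kn + 1)).
{ rewrite Hw0. unfold Rdiv. assert (0 < INR kn * (INR kn + 1)) by nra.
  rewrite ln_mult by (try apply Rinv_0_lt_compat; lra). rewrite ln_Rinv by lra.
  assert (0 <= ln (C_const N)) by (rewrite <- ln_1; apply ln_le'; lra).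
  assert (Hlp : ln (INR kn * (INR kn + 1)) <= ln ((INR kn + 1) ^ 2)) by (apply ln_le'; nra).
  rewrite ln_pow in Hlp by lra. simpl (INR 2) in Hlp. lra. }
assert (Hfin : rsum T (fun t => f t (xt t)) <= rsum T (fun t => f t (expert grad Phi proj eta x1 t kn)) + K * (- ln w0) + K).
{ apply Rmult_le_compat_l with (r := K) in Hmeta; [|lra].
  replace (INR T * (alpha ^ 2 * c ^ 2 / 8)) with (alpha ^ 2 * K ^ 2) in Hmeta by (rewrite HK2; field; lra).
  replace (K * (alpha * rsum T (fun t => f t (expert grad Phi proj eta x1 t kn)) - ln w0 + alpha ^ 2 * K ^ 2))
    with ((alpha * K) * rsum T (fun t => f t (expert grad Phi proj eta x1 t kn)) + K * (- ln w0) + K * (alpha * K) ^ 2) in Hmeta by ring.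
  replace (K * (alpha * rsum T (fun t => f t (ader_output f grad Phi proj eta x1 N alpha t))))
    with ((alpha * K) * rsum T (fun t => f t (ader_output f grad Phi proj eta x1 N alpha t))) in Hmeta by ring.
  rewrite HaK in Hmeta. unfold xt. lra. }
rewrite Hsq, Hk. fold K.
assert (K * (- ln w0) <= K * (2 * ln (INR kn + 1))) by (apply Rmult_le_compat_l; lra).
lra.
Qed.
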